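(* For every integer $n\ge2$, \[ Q_n(x)=\sum_{j=0}^{\lfloor n/2\rfloor}Y(n-j,j)(1+x)^j=\sum_{j=0}^{\lfloor n/2\rfloor}\left(\binom{n-j}{j}+\binom{n-j-1}{j-1}\right)(1+x)^j . \]
   Context: For $n\ge1$ let $\Xi_n$ be the poset on $\{x_1,\dots,x_n\}$ whose cover relations are exactly: $x_2\prec x_1$, $x_3\prec x_2$, and for $3\le i\le n-1$, $x_i\prec x_{i+1}$ if $i$ is odd and $x_{i+1}\prec x_i$ if $i$ is even (so $x_1>x_2>x_3<x_4>x_5<\cdots$). A filter of a poset is an up-closed subset. The matchable Lucas cube $\Omega_n$ is the graph whose vertices are the filters of $\Xi_n$, two filters adjacent iff one is obtained from the other by deleting a single element. $q_{n,k}$ denotes the number of induced subgraphs of $\Omega_n$ isomorphic to the $k$-dimensional hypercube, and $Q_n(x)=\sum_{k\ge0}q_{n,k}x^k$. The Lucas triangle is $Y(n,k)=\binom nk+\binom{n-1}{k-1}$ for $0\le k\le n$ (binomial coefficients with negative lower index are $0$ except that $\binom{-1}{-1}=1$). *)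

(* Defs.v *)
From HB Require Import structures.
From mathcomp Require Import all_boot all_order all_algebra.
Set Implicit Arguments. Unset Strict Implicit. Unset Printing Implicit Defensive.
Import GRing.Theory.

(* Element x_{i+1} of Xi_n is represented by i : 'I_n (0-indexed). *)

(* Cover relation of Xi_n, 1-indexed: xi_cov1 n a b  <=>  x_a covered by x_b (x_a ≺ x_b). *)
Definition xi_cov1 (n a b : nat) : bool :=
  [|| (a == 2) && (b == 1),
      (a == 3) && (b == 2),
      [&& 3 <= a, a <= n.-1, odd a & b == a.+1]
    | [&& 3 <= b, b <= n.-1, ~~ odd b & a == b.+1]].

Definition xi_cov (n : nat) : rel 'I_n := fun i j => xi_cov1 n i.+1 j.+1.

Definition xi_le (n : nat) (i j : 'I_n) : bool := connect (@xi_cov n) i j.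

Definition is_filter (n : nat) (F : {set 'I_n}) : bool :=
  [forall i, forall j, (i \in F) && xi_le i j ==> (j \in F)].

Definition filters (n : nat) : {set {set 'I_n}} := [set F | is_filter F].

Definition omega_adj (n : nat) (F G : {set 'I_n}) : bool :=
  ((G \subset F) && (#|F :\: G| == 1)) || ((F \subset G) && (#|G :\: F| == 1)).

Definition cube_adj (k : nat) (A B : {set 'I_k}) : bool :=
  #|(A :\: B) :|: (B :\: A)| == 1.

Definition induces_cube (n k : nat) (V : {set {set 'I_n}}) : bool :=
  (V \subset filters n) &&
  [exists f : {ffun {set 'I_k} -> {set 'I_n}},
     [&& injectiveb f, f @: [set: {set 'I_k}] == V &
         [forall A, forall B, omega_adj (f A) (f B) == cube_adj A B]]].

Definition q (n k : nat) : nat := #|[set V : {set {set 'I_n}} | induces_cube k V]|.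

(* Lucas triangle Y(m,k) = C(m,k) + C(m-1,k-1), with C(-1,-1) = 1 and
   binomials with negative lower index equal to 0. (Only used for 0 <= k <= m.) *)
Definition Y (m k : nat) : nat :=
  'C(m, k) + (if k is k'.+1 then 'C(m.-1, k') else (m == 0 : nat)).

(* Main.v *)
Require Import Defs.
From mathcomp Require Import all_boot all_order all_algebra.
From mathcomp Require Import zify ring.
Set Implicit Arguments. Unset Strict Implicit. Unset Printing Implicit Defensive.


Definition sdf {U : finType} (X Y : {set U}) := (X :\: Y) :|: (Y :\: X).

Lemma in_sdf {U : finType} (X Y : {set U}) x : (x \in sdf X Y) = (x \in X) (+) (x \in Y).
Proof. by rewrite !inE; case: (x \in X); case: (x \in Y). Qed.

Lemma sdoneP {U : finType} (X Y : {set U}) :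
  reflect (exists a, forall x, (x \in Y) = (x \in X) (+) (x == a)) (#|sdf X Y| == 1).
Proof.
apply: (iffP cards1P) => [[a Ha]|[a Ha]]; exists a.
- move=> x; have : (x \in sdf X Y) = (x == a) by rewrite Ha in_set1.
  rewrite in_sdf => <-.
  by case: (x \in X); case: (x \in Y).
- apply/setP => x; rewrite in_sdf in_set1 Ha; by case: (x \in X); case: (x == a).
Qed.

Lemma omega_adjE n (F G : {set 'I_n}) : omega_adj F G = (#|sdf F G| == 1).
Proof.
rewrite /omega_adj /sdf; case: (boolP (G \subset F)) => GF /=.
  have -> : G :\: F = set0 by apply/eqP; rewrite setD_eq0.
  by rewrite setU0 cards0 andbF orbF.
case: (boolP (F \subset G)) => FG /=.
  have -> : F :\: G = set0 by apply/eqP; rewrite setD_eq0.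
  by rewrite set0U.
apply/esym/negP => /sdoneP [a Ha].
case/subsetPn: GF => x xG xF; case/subsetPn: FG => y yF yG.
have := Ha x; rewrite xG (negbTE xF) /= => /esym/eqP ex.
have := Ha y; rewrite yF (negbTE yG) /= => /esym; case: eqP => // ey _.
by move: xG; rewrite ex -ey (negbTE yG).
Qed.

Lemma square {U : finType} (X Y Z W : {set U}) :
  #|sdf X Y| == 1 -> #|sdf X Z| == 1 -> #|sdf Y W| == 1 -> #|sdf Z W| == 1 ->
  Y != Z -> X != W -> forall x, (x \in W) = (x \in Y) (+) (x \in X) (+) (x \in Z).
Proof.
move=> /sdoneP[a Ha] /sdoneP[b Hb] /sdoneP[c Hc] /sdoneP[d Hd] YZ XW.
have ab : a != b.
  apply: contraNneq YZ => eab; apply/eqP/setP => x; by rewrite Ha Hb eab.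
have ac : a != c.
  apply: contraNneq XW => eac; apply/eqP/setP => x; by rewrite Hc Ha eac; case: (x \in X); case: (x == c).
have cb : c = b.
  apply/eqP; apply/negPn/negP => cb.
  have h1 := Hc c; rewrite Hd Hb Ha eqxx in h1.
  have h2 := Hc b; rewrite Hd Hb Ha eqxx in h2.
  move: h1 h2; rewrite (negbTE cb) (eq_sym c a) (negbTE ac) (eq_sym b a) (negbTE ab) (eq_sym b c) (negbTE cb).
  move=> h1 h2.
  have cd : c == d by move: h1; case: (c \in X); case: (c == d).
  have bd : b == d by move: h2; case: (b \in X); case: (b == d).
  by rewrite (eqP cd) (eqP bd) eqxx in cb.
move=> x; rewrite Hc Ha Hb cb.
by case: (x \in X); case: (x == a); case: (x == b).
Qed.

Section Cubes.
Variable n : nat.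
Local Notation T := 'I_n.

Definition cubeset (X S : {set T}) : {set {set T}} := [set X :|: Ts | Ts in powerset S].
Definition addset (X : {set T}) : {set T} := [set i | (i \notin X) && is_filter (i |: X)].
Definition good k (p : {set T} * {set T}) := [&& is_filter p.1, p.2 \subset addset p.1 & #|p.2| == k].

Lemma filterP (F : {set T}) i j : is_filter F -> i \in F -> xi_le i j -> j \in F.
Proof. move=> /forallP /(_ i) /forallP /(_ j) /implyP H iF le; apply: H; by rewrite iF le. Qed.

Lemma filterU (X Ts : {set T}) : is_filter X -> Ts \subset addset X -> is_filter (X :|: Ts).
Proof.
move=> fX sub; apply/forallP => i; apply/forallP => j; apply/implyP => /andP[].
rewrite in_setU => /orP[iX|iT] le.
  by rewrite in_setU (filterP fX iX le).
have := subsetP sub i iT; rewrite inE => /andP[_ fi].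
have := filterP fi (setU11 i X) le; rewrite in_setU1 in_setU => /orP[/eqP->|->]; by rewrite ?iT ?orbT.
Qed.

Lemma sdf_imset k (h : 'I_k -> T) (X : {set T}) (A B : {set 'I_k}) : injective h -> (forall i, h i \notin X) ->
  sdf (X :|: h @: A) (X :|: h @: B) = h @: sdf A B.
Proof.
move=> hi hX; apply/setP => x; rewrite in_sdf !in_setU.
case: (pickP (fun i => h i == x)) => [i /eqP <- | none].
  by rewrite !mem_imset // in_sdf (negbTE (hX i)).
have nim : forall C : {set 'I_k}, (x \in h @: C) = false.
  by move=> C; apply: negbTE; apply/negP => /imsetP [i _ e]; have := none i; rewrite e eqxx.
by rewrite !nim; case: (x \in X).
Qed.

Lemma cube_of_good k X S : good k (X,S) -> induces_cube k (cubeset X S).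
Proof.
case/and3P => /= fX sub /eqP cS.
pose h (i : 'I_k) : T := enum_val (cast_ord (esym cS) i).
have hi : injective h by move=> i j /enum_val_inj /cast_ord_inj.
have hS : forall i, h i \in S by move=> i; exact: enum_valP.
have hX : forall i, h i \notin X by move=> i; have := subsetP sub _ (hS i); rewrite inE => /andP[].
have Sh : forall x, x \in S -> exists i, x = h i.
  move=> x xS; exists (cast_ord cS (enum_rank_in xS x)); by rewrite /h cast_ordK enum_rankK_in.
pose f := [ffun A : {set 'I_k} => X :|: h @: A].
apply/andP; split.
  apply/subsetP => Y /imsetP [Ts]; rewrite powersetE => TsS ->; rewrite inE; apply: filterU => //.
  exact: subset_trans TsS sub.
apply/existsP; exists f; apply/and3P; split.
- apply/injectiveP => A B; rewrite !ffunE => e.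
  apply/setP => i; have := sdf_imset A B hi hX; rewrite e.
  move/setP/(_ (h i)); rewrite mem_imset // !in_sdf addbb.
  by case: (i \in A); case: (i \in B).
- apply/eqP/setP => Y; apply/imsetP/imsetP.
  + case=> A _ ->; exists (h @: A); last by rewrite ffunE.
    rewrite powersetE; apply/subsetP => x /imsetP [i _ ->]; exact: hS.
  + case=> Ts; rewrite powersetE => TsS ->; exists [set i | h i \in Ts] => //; rewrite ffunE.
    congr (_ :|: _); apply/setP => x; apply/idP/imsetP => [xT|[i]]; last by rewrite inE => hT ->.
    have [i ei] := Sh x (subsetP TsS x xT); exists i => //; by rewrite inE -ei.
- apply/forallP => A; apply/forallP => B; rewrite !ffunE omega_adjE sdf_imset // card_imset //.
Qed.

Lemma cubeset_inj (X S X' S' : {set T}) : (forall s, s \in S -> s \notin X) -> (forall s, s \in S' -> s \notin X') ->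
  cubeset X S = cubeset X' S' -> X = X' /\ S = S'.
Proof.
have memc : forall X S Ts : {set T}, Ts \subset S -> X :|: Ts \in cubeset X S.
  by move=> X0 S0 Ts TS; apply/imsetP; exists Ts; rewrite ?powersetE.
have incl : forall X S X' S' : {set T}, cubeset X S = cubeset X' S' -> X' \subset X.
  move=> X0 S0 X1 S1 e; have := memc X0 S0 set0 (sub0set _); rewrite setU0 e.
  by case/imsetP => Ts _ ->; exact: subsetUl.
have incl2 : forall X S S' : {set T}, (forall s, s \in S -> s \notin X) -> cubeset X S = cubeset X S' -> S \subset S'.
  move=> X0 S0 S1 d e; have := memc X0 S0 S0 (subxx _); rewrite e.
  case/imsetP => Ts; rewrite powersetE => TS eT; apply/subsetP => s sS.
  have : s \in X0 :|: S0 by rewrite in_setU sS orbT.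
  rewrite eT in_setU (negbTE (d s sS)) /= => sT; exact: subsetP TS s sT.
move=> d d' e; have eX : X = X' by apply/eqP; rewrite eqEsubset (incl _ _ _ _ e) (incl _ _ _ _ (esym e)).
split => //; subst X'; apply/eqP; rewrite eqEsubset (incl2 _ _ _ d e) (incl2 _ _ _ d' (esym e)) //.
Qed.

Lemma good_of_cube k (x0 : T) V : induces_cube k V ->
  exists X S, good k (X,S) /\ V = cubeset X S.
Proof.
case/andP => Vf /existsP [f /and3P [/injectiveP fi /eqP fV /forallP fa]].
have adj : forall A B, (#|sdf (f A) (f B)| == 1) = (#|sdf A B| == 1).
  by move=> A B; have := forallP (fa A) B; rewrite omega_adjE => /eqP.
have sdfadd : forall (B : {set 'I_k}) d, d \notin B -> #|sdf B (d |: B)| == 1.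
  move=> B d dB; apply/sdoneP; exists d => x; rewrite in_setU1.
  by case: eqP => [->|_]; rewrite ?(negbTE dB) ?addbF.
pose c d := odflt x0 [pick x in sdf (f set0) (f [set d])].
have cP : forall d x, (x \in f [set d]) = (x \in f set0) (+) (x == c d).
  move=> d; have : #|sdf (f set0) (f [set d])| == 1.
    rewrite adj; have := sdfadd set0 d (negbT (in_set0 d)); by rewrite setU0.
  case/cards1P => a Ha.
  have -> : c d = a by rewrite /c Ha; case: pickP => [y /set1P -> //|/(_ a)]; rewrite set11.
  move=> x; have : (x \in sdf (f set0) (f [set d])) = (x == a) by rewrite Ha in_set1.
  rewrite in_sdf => <-; by case: (x \in f set0); case: (x \in f [set d]).
have step : forall m (B : {set 'I_k}) d, #|B| <= m -> d \notin B ->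
    forall x, (x \in f (d |: B)) = (x \in f B) (+) (x == c d).
  elim=> [|m IH] B d.
    by rewrite leqn0 cards_eq0 => /eqP -> _ x; rewrite setU0 cP.
  move=> cB dB x; case: (set_0Vmem B) => [->|[e eB]]; first by rewrite setU0 cP.
  have eB' : e \notin B :\ e by rewrite setD11.
  have dB' : d \notin B :\ e by rewrite in_setD1 (negbTE dB) andbF.
  have de : d != e by apply: contraNneq dB => ->.
  have cB' : #|B :\ e| <= m by rewrite -ltnS (leq_trans _ cB) // (cardsD1 e B) eB.
  have h1 : #|sdf (f (B :\ e)) (f (d |: (B :\ e)))| == 1 by rewrite adj sdfadd.
  have h2 : #|sdf (f (B :\ e)) (f (e |: (B :\ e)))| == 1 by rewrite adj sdfadd.
  have h3 : #|sdf (f (d |: (B :\ e))) (f (d |: (e |: (B :\ e))))| == 1.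
    by rewrite setUCA adj sdfadd // in_setU1 negb_or eq_sym de eB'.
  have h4 : #|sdf (f (e |: (B :\ e))) (f (d |: (e |: (B :\ e))))| == 1.
    by rewrite adj sdfadd // in_setU1 negb_or de dB'.
  have h5 : f (d |: (B :\ e)) != f (e |: (B :\ e)).
    apply/eqP => /fi /setP /(_ d); by rewrite !in_setU1 eqxx (negbTE de) (negbTE dB').
  have h6 : f (B :\ e) != f (d |: (e |: (B :\ e))).
    apply/eqP => /fi /setP /(_ d); by rewrite !in_setU1 eqxx (negbTE dB').
  have := square h1 h2 h3 h4 h5 h6 x.
  rewrite (setD1K eB) (IH _ d cB' dB' x) => ->.
  by case: (x \in f (B :\ e)); case: (x == c d); case: (x \in f B).
have ci : injective c.
  move=> d e cde; apply/set1_inj/fi/setP => x; by rewrite !cP cde.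
have closedf : forall m (A : {set 'I_k}), #|A| <= m ->
    forall x, (x \in f A) = (x \in f set0) (+) (x \in c @: A).
  elim=> [|m IH] A.
    by rewrite leqn0 cards_eq0 => /eqP -> x; rewrite imset0 in_set0 addbF.
  move=> cA x; case: (set_0Vmem A) => [->|[d dA]]; first by rewrite imset0 in_set0 addbF.
  have dA' : d \notin A :\ d by rewrite setD11.
  have cA' : #|A :\ d| <= m by rewrite -ltnS (leq_trans _ cA) // (cardsD1 d A) dA.
  rewrite -(setD1K dA) (step _ (A :\ d) d (leqnn _) dA') (IH _ cA') imsetU1 in_setU1.
  case: (boolP (x == c d)) => [/eqP ->|xn]; last by rewrite addbF.
  by rewrite (mem_imset _ _ ci) (negbTE dA') addbF.
have fA : forall A x, (x \in f A) = (x \in f set0) (+) (x \in c @: A).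
  by move=> A; apply: closedf (leqnn _).
pose S := c @: [set: 'I_k]; pose X := f set0 :\: S.
have VE : V = cubeset X S.
  rewrite -fV; apply/setP => Y; apply/imsetP/imsetP.
    case=> A _ ->; exists (f A :&: S); first by rewrite powersetE subsetIr.
    apply/setP => x; rewrite in_setU in_setD in_setI (fA A).
    case: (boolP (x \in S)) => xS; first by rewrite andbT /=.
    have -> : (x \in c @: A) = false.
      apply: negbTE; apply: contra xS; apply/subsetP; apply: imsetS; exact: subsetT.
    by rewrite addbF andbF orbF.
  case=> Ts; rewrite powersetE => TsS ->.
  exists [set d | (c d \in Ts) != (c d \in f set0)] => //.
  apply/setP => x; rewrite (fA) in_setU in_setD.
  case: (boolP (x \in S)) => xS.
    case/imsetP: xS => d0 _ ->; rewrite mem_imset // inE /=.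
    by case: (c d0 \in Ts); case: (c d0 \in f set0).
  have -> : (x \in Ts) = false by apply: negbTE; apply: contra xS; apply/subsetP.
  have -> : (x \in c @: [set d | (c d \in Ts) != (c d \in f set0)]) = false.
    apply: negbTE; apply: contra xS; apply/subsetP; apply: imsetS; exact: subsetT.
  by rewrite addbF orbF.
exists X, S; split => //.
have inV : forall Ts : {set T}, Ts \subset S -> is_filter (X :|: Ts).
  move=> Ts TsS; have := subsetP Vf (X :|: Ts); rewrite VE inE; apply; apply/imsetP.
  by exists Ts; rewrite ?powersetE.
apply/and3P; split => /=.
- by have := inV set0 (sub0set S); rewrite setU0.
- apply/subsetP => s sS; rewrite inE; apply/andP; split.
    by rewrite in_setD sS.
  by have := inV [set s]; rewrite sub1set sS setUC; apply.
- by rewrite card_imset // cardsT card_ord.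
Qed.

Lemma q_count k (x0 : T) : q n k = \sum_(X : {set T}) is_filter X * 'C(#|addset X|, k).
Proof.
rewrite /q.
have -> : [set V : {set {set T}} | induces_cube k V] = [set cubeset p.1 p.2 | p in [set p | good k p]].
  apply/setP => V; rewrite inE; apply/idP/imsetP.
    move/(good_of_cube x0) => [X [S [g ->]]]; exists (X,S) => //; by rewrite inE.
  case=> [[X S]]; rewrite inE => g ->; exact: cube_of_good.
rewrite card_in_imset; last first.
  move=> [X S] [X' S']; rewrite !inE => /and3P[_ s1 _] /and3P[_ s2 _] /= e.
  have d1 : forall s, s \in S -> s \notin X.
    by move=> s sS; have := subsetP s1 s sS; rewrite inE => /andP[].
  have d2 : forall s, s \in S' -> s \notin X'.
    by move=> s sS; have := subsetP s2 s sS; rewrite inE => /andP[].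
  by have [-> ->] := cubeset_inj d1 d2 e.
transitivity (\sum_(p : {set T} * {set T}) (good k p : nat)).
  by rewrite -sum1_card big_mkcond; apply: eq_bigr => p _; rewrite inE; case: good.
rewrite (eq_bigr (fun p => (good k (p.1,p.2) : nat))); last by case.
rewrite -(pair_bigA _ (fun X S => (good k (X,S) : nat))).
apply: eq_bigr => X _; rewrite /good /=.
case: (is_filter X) => /=; last by rewrite big1.
  rewrite mul1n -cards_draws; apply/esym; rewrite -sum1_card big_mkcond /=; apply: eq_bigr => S _; rewrite inE.
by case: (_ && _).
Qed.

End Cubes.


Definition up (p : nat) : bool := (2 <= p) && ~~ odd p.

Lemma xi_cov1E n a b : a < n -> b < n ->
  xi_cov1 n a.+1 b.+1 = ((b == a.+1) && up a) || ((a == b.+1) && ~~ up b).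
Proof. rewrite /xi_cov1 /up => Ha Hb; apply/idP/idP; lia. Qed.

Definition okd (u b b' : bool) := if u then b ==> b' else b' ==> b.
Definition validL (s : seq bool) :=
  all (fun p => okd (up p) (nth false s p) (nth false s p.+1)) (iota 0 (size s).-1).
Definition addL (s : seq bool) (i : nat) :=
  [&& ~~ nth false s i, (0 < i) && ~~ up i.-1 ==> nth false s i.-1
    & (i.+1 < size s) && up i ==> nth false s i.+1].
Definition countL s := count (addL s) (iota 0 (size s)).

Section Bits.
Variable n : nat.

Definition bits (F : {set 'I_n}) := [seq i \in F | i <- enum 'I_n].

Lemma size_bits F : size (bits F) = n.
Proof. by rewrite size_map size_enum_ord. Qed.

Lemma nth_bits F (j : 'I_n) : nth false (bits F) j = (j \in F).
Proof.
rewrite (nth_map j) ?size_enum_ord //; congr (_ \in F); apply: val_inj; by rewrite /= nth_enum_ord.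
Qed.

Lemma xi_covE (i j : 'I_n) :
  xi_cov i j = ((j == i.+1 :> nat) && up i) || ((i == j.+1 :> nat) && ~~ up j).
Proof. by rewrite /xi_cov xi_cov1E. Qed.

Lemma filter_cov (F : {set 'I_n}) :
  is_filter F = [forall i, forall j, xi_cov i j && (i \in F) ==> (j \in F)].
Proof.
apply/idP/idP.
  move=> fF; apply/forallP => i; apply/forallP => j; apply/implyP => /andP[c iF].
  exact: filterP fF iF (connect1 c).
move=> H; apply/forallP => i; apply/forallP => j; apply/implyP => /andP[iF /connectP [p pth ->]].
elim: p i iF pth => //= y p IH i iF /andP[c pth]; apply: IH pth.
by have := forallP (forallP H i) y; rewrite c iF => /implyP; apply.
Qed.

Lemma filter_valid F : is_filter F = validL (bits F).
Proof.
rewrite filter_cov /validL size_bits; apply/idP/idP.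
- move=> H; apply/allP => p; rewrite mem_iota add0n => /andP[_ pn].
  have p1 : p.+1 < n by lia.
  have p0 : p < n by lia.
  have h1 := forallP (forallP H (Ordinal p0)) (Ordinal p1).
  have h2 := forallP (forallP H (Ordinal p1)) (Ordinal p0).
  move: h1 h2; rewrite !xi_covE /= -(nth_bits F (Ordinal p0)) -(nth_bits F (Ordinal p1)) /=.
  rewrite eqxx /okd; case: (up p); rewrite /= ?orbF ?andbF ?(gtn_eqF (ltnSn p)) //= ?orbF => h1 h2.
  by rewrite orbT /= in h2.
- move=> /allP H; apply/forallP => i; apply/forallP => j; apply/implyP => /andP[].
  rewrite xi_covE => /orP[/andP[/eqP ji u]|/andP[/eqP ij u]] iF.
  + have := H i; rewrite mem_iota add0n /= /okd u -ji !nth_bits iF => /(_ _)/implyP; apply => //.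
    have := ltn_ord j; lia.
  + have := H j; rewrite mem_iota add0n /= /okd (negbTE u) -ij !nth_bits iF => /(_ _)/implyP; apply => //.
    have := ltn_ord i; lia.
Qed.

Lemma cov_irr (i : 'I_n) : xi_cov i i = false.
Proof. rewrite xi_covE; apply/negbTE; lia. Qed.

Lemma add_bits F (i : 'I_n) : is_filter F -> (i \in addset F) = addL (bits F) i.
Proof.
rewrite inE /addL size_bits nth_bits; case: (boolP (i \in F)) => //= iF fF.
have E : is_filter (i |: F) = [forall j, xi_cov i j ==> (j \in F)].
  rewrite filter_cov; apply/idP/idP.
    move=> H; apply/forallP => j; apply/implyP => c.
    have := forallP (forallP H i) j; rewrite c setU11 /= in_setU1 => /orP[/eqP ji|//].
    by rewrite ji cov_irr in c.
  move=> H; apply/forallP => u; apply/forallP => v; apply/implyP => /andP[c].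
  rewrite !in_setU1 => /orP[/eqP eu|uF].
    by rewrite eu in c; rewrite (implyP (forallP H v) c) orbT.
  by rewrite (filterP fF uF (connect1 c)) orbT.
rewrite E; apply/idP/idP.
- move=> H; apply/andP; split; apply/implyP => /andP[h1 h2].
    have j0 : i.-1 < n by have := ltn_ord i; lia.
    have := implyP (forallP H (Ordinal j0)); rewrite xi_covE /= -(nth_bits F (Ordinal j0)) /=; apply.
    apply/orP; right; apply/andP; split => //; apply/eqP; lia.
  have := implyP (forallP H (Ordinal h1)); rewrite xi_covE /= -(nth_bits F (Ordinal h1)) /=; apply.
  by rewrite eqxx h2.
- move=> /andP[h1 h2]; apply/forallP => j; apply/implyP.
  rewrite xi_covE => /orP[/andP[/eqP ji u]|/andP[/eqP ij u]].
    move: h2; rewrite -ji nth_bits u andbT => /implyP; apply; exact: ltn_ord.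
  move: h1; have -> : i.-1 = j by lia.
  by rewrite nth_bits ij u andbT => /implyP; apply.
Qed.

Lemma card_add F : is_filter F -> #|addset F| = countL (bits F).
Proof.
move=> fF; rewrite /countL size_bits -sum1_card -sum1_count.
rewrite (eq_bigl (fun i : 'I_n => addL (bits F) i)); last by move=> i; rewrite add_bits.
by rewrite -(big_mkord (fun i => addL (bits F) i) (fun _ => 1)) /index_iota subn0.
Qed.

Fixpoint allL (m : nat) : seq (seq bool) :=
  if m is m'.+1 then [seq rcons s true | s <- allL m'] ++ [seq rcons s false | s <- allL m']
  else [:: [::]].

Lemma mem_allL m s : (s \in allL m) = (size s == m).
Proof.
elim: m s => [|m IH] s; first by case: s.
case/lastP: s => [|t b]; rewrite /= mem_cat.
  by apply/negbTE; rewrite negb_or; apply/andP; split; apply/mapP => [[t _]]; case: t.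
rewrite size_rcons eqSS -IH; case: b.
  rewrite (mem_map (@rcons_injl _ true)); case: (t \in allL m) => //=.
  by apply: negbTE; apply/mapP => [[t' _ /rcons_inj []]].
rewrite (mem_map (@rcons_injl _ false)); case: (t \in allL m); rewrite ?orbT //=.
by rewrite orbF; apply: negbTE; apply/mapP => [[t' _ /rcons_inj []]].
Qed.

Lemma uniq_allL m : uniq (allL m).
Proof.
elim: m => //= m IH; rewrite cat_uniq !(map_inj_uniq (@rcons_injl _ _)) IH /= andbT.
by apply/hasPn => s /mapP [t _ ->]; apply/mapP => [[t' _ /rcons_inj []]].
Qed.

Lemma sum_bits (R : nmodType) (G : seq bool -> R) :
  (\sum_(F : {set 'I_n}) G (bits F) = \sum_(s <- allL n) G s)%R.
Proof.
have bi : injective bits.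
  move=> F F' e; apply/setP => j; by rewrite -!nth_bits e.
apply/esym; rewrite (perm_big (map bits (enum [set: {set 'I_n}]))).
  by rewrite big_map big_enum; apply: eq_bigl => F; rewrite inE.
apply: uniq_perm; rewrite ?uniq_allL ?(map_inj_uniq bi) ?enum_uniq //.
move=> s; rewrite mem_allL; apply/idP/idP; last first.
  by move=> /mapP [F _ ->]; rewrite size_bits.
move=> /eqP sz; apply/mapP; exists [set j : 'I_n | nth false s j]; first by rewrite mem_enum inE.
apply: (@eq_from_nth _ false); rewrite ?size_bits // => i ilt.
have ilt2 : i < n by rewrite -sz.
by rewrite (nth_bits _ (Ordinal ilt2)) inE.
Qed.
End Bits.


Definition lastL (s : seq bool) := nth false s (size s).-1.
Definition preL (s : seq bool) := addL s (size s).-1.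
Definition finL (s : seq bool) := count (addL s) (iota 0 (size s).-1).

Lemma countL_split s : 0 < size s -> countL s = finL s + preL s.
Proof.
rewrite /countL /finL /preL; case: (size s) => // m _.
by rewrite -addn1 iotaD count_cat /= addn0 addn1.
Qed.

Lemma addL_rcons_lt s b i : i.+1 < size s -> addL (rcons s b) i = addL s i.
Proof.
move=> H; rewrite /addL size_rcons !nth_rcons.
have -> : i < size s by lia.
have -> : i.-1 < size s by lia.
have -> : i.+1 < (size s).+1 by lia.
by rewrite H.
Qed.

Lemma addL_rcons_last s b : 0 < size s ->
  addL (rcons s b) (size s).-1 = preL s && (up (size s).-1 ==> b).
Proof.
move=> H; rewrite /preL /addL size_rcons !nth_rcons.
have -> : (size s).-1 < size s by lia.
have -> : (size s).-1.-1 < size s by lia.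
have -> : (size s).-1.+1 < (size s).+1 by lia.
have -> : ((size s).-1.+1 < size s) = false by lia.
have -> : (size s).-1.+1 == size s by lia.
by rewrite /= andbT andbA.
Qed.

Lemma preL_rcons s b : 0 < size s ->
  preL (rcons s b) = ~~ b && (~~ up (size s).-1 ==> lastL s).
Proof.
move=> H; rewrite /preL /lastL /addL size_rcons /= !nth_rcons ltnn eqxx H /=.
have -> : (size s).-1 < size s by lia.
by rewrite ltnn andbT.
Qed.

Lemma lastL_rcons s b : lastL (rcons s b) = b.
Proof. by rewrite /lastL size_rcons nth_rcons ltnn eqxx. Qed.

Lemma preL_last s : preL s -> ~~ lastL s.
Proof. by rewrite /preL /addL /lastL => /and3P[]. Qed.

Lemma validL_rcons s b : 0 < size s ->
  validL (rcons s b) = validL s && okd (up (size s).-1) (lastL s) b.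
Proof.
move=> H; rewrite /validL /lastL size_rcons /=.
case E: (size s) H => [//|m] _; rewrite -pred_Sn.
rewrite (_ : iota 0 m.+1 = iota 0 m ++ [:: m]); last by rewrite -addn1 iotaD.
rewrite all_cat /= andbT; congr (_ && _).
  apply: eq_in_all => p; rewrite mem_iota add0n => /andP[_ pm].
  rewrite !nth_rcons E.
  have -> : p < m.+1 by lia.
  by have -> : p.+1 < m.+1 by lia.
by rewrite !nth_rcons E ltnSn ltnn eqxx.
Qed.

Lemma finL_rcons s b : 0 < size s ->
  finL (rcons s b) = finL s + (preL s && (up (size s).-1 ==> b)).
Proof.
move=> H; rewrite /finL size_rcons /=.
have -> : iota 0 (size s) = iota 0 (size s).-1 ++ [:: (size s).-1].
  by rewrite -{1}(prednK H) -addn1 iotaD.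
rewrite count_cat /= addn0 addL_rcons_last //.
congr (_ + _); apply: eq_in_count => p; rewrite mem_iota add0n => /andP[_ pm].
apply: addL_rcons_lt; lia.
Qed.

Section Alg.
Import GRing.Theory.
Local Open Scope ring_scope.
Variable R : comNzRingType.
Variable y : R.

Definition SU m := \sum_(s <- allL m) y ^+ finL s *+ (validL s && lastL s).
Definition SV m := \sum_(s <- allL m) y ^+ finL s *+ [&& validL s, ~~ lastL s & preL s].
Definition SW m := \sum_(s <- allL m) y ^+ finL s *+ [&& validL s, ~~ lastL s & ~~ preL s].
Definition Tot m := \sum_(s <- allL m) y ^+ countL s *+ validL s.

Lemma sum_allS (G : seq bool -> R) m :
  \sum_(s <- allL m.+1) G s = \sum_(s <- allL m) (G (rcons s true) + G (rcons s false)).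
Proof. by rewrite [allL _]/= big_cat !big_map big_split. Qed.

Ltac fin_case s :=
  case: (boolP (preL s)) => [/preL_last /negbTE -> | _];
  case: (validL s); try case: (lastL s);
  rewrite /= ?addn0 ?addn1 ?exprS ?mulr0n ?mulr1n ?addr0 ?add0r ?mulr0 ?mul0r ?addr0 ?add0r //.

Lemma Tot_split m : (0 < m)%N -> Tot m = SU m + y * SV m + SW m.
Proof.
move=> m0; rewrite /Tot /SU /SV /SW mulr_sumr -!big_split /=.
apply: eq_big_seq => s; rewrite mem_allL => /eqP sz.
rewrite countL_split ?sz //.
fin_case s.
Qed.

Lemma stepU m : (0 < m)%N -> SU m.+1 = if up m.-1 then SU m + y * SV m + SW m else SU m.
Proof.
move=> m0; rewrite /SU /SV /SW sum_allS; case U: (up m.-1); rewrite ?mulr_sumr -?big_split /=;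
apply: eq_big_seq => s; rewrite mem_allL => /eqP sz;
rewrite !validL_rcons ?finL_rcons ?preL_rcons ?lastL_rcons ?sz // U /okd; fin_case s.
Qed.

Lemma stepV m : (0 < m)%N -> SV m.+1 = if up m.-1 then SV m + SW m else SU m.
Proof.
move=> m0; rewrite /SU /SV /SW sum_allS; case U: (up m.-1); rewrite ?mulr_sumr -?big_split /=;
apply: eq_big_seq => s; rewrite mem_allL => /eqP sz;
rewrite !validL_rcons ?finL_rcons ?preL_rcons ?lastL_rcons ?sz // U /okd; fin_case s.
Qed.

Lemma stepW m : (0 < m)%N -> SW m.+1 = if up m.-1 then 0 else y * SV m + SW m.
Proof.
move=> m0; rewrite /SU /SV /SW sum_allS; case U: (up m.-1); rewrite ?mulr_sumr -?big_split /=.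
  rewrite big1_seq // => s; rewrite mem_allL => /eqP sz.
  rewrite !validL_rcons ?finL_rcons ?preL_rcons ?lastL_rcons ?sz // U /okd; fin_case s.
apply: eq_big_seq => s; rewrite mem_allL => /eqP sz;
rewrite !validL_rcons ?finL_rcons ?preL_rcons ?lastL_rcons ?sz // U /okd; fin_case s.
Qed.
End Alg.


Lemma Y0 n j : 2 <= n -> n./2 < j -> Y (n - j) j = 0.
Proof. case: j => [|j] h1 h2; first lia. rewrite /Y !bin_small //; lia. Qed.

Lemma Yrec m j : Y (m.+4 - j.+1) j.+1 = Y (m.+3 - j.+1) j.+1 + Y (m.+2 - j) j.
Proof.
rewrite /Y !subSS.
case: (leqP j m.+2) => hj.
  rewrite (subSn hj).
  case E: (m.+2 - j) => [|a].
    have -> : j = m.+2 by lia.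
    by rewrite !bin_small.
  rewrite /= binS; case: j hj E => [|j] hj E /=.
    by rewrite !bin0 addn0.
  rewrite !binS; lia.
have -> : m.+3 - j = 0 by lia.
have -> : m.+2 - j = 0 by lia.
case: j hj => [|[|[|j]]] // hj.
Qed.

Section Alg2.
Import GRing.Theory.
Local Open Scope ring_scope.
Variable R : comNzRingType.
Variable y : R.

Definition stepf (u : bool) (t : R * R * R) : R * R * R :=
  let: (a, b, c) := t in if u then (a + y * b + c, b + c, 0) else (a, a, y * b + c).

Fixpoint st (m : nat) : R * R * R :=
  if m is m'.+1 then (if m' is 0 then (1, 1, 0) else stepf (up m'.-1) (st m')) else (0, 0, 0).

Lemma stS m : st m.+2 = stepf (up m) (st m.+1).
Proof. by []. Qed.

Lemma st_ok m : (0 < m)%N -> (SU y m, SV y m, SW y m) = st m.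
Proof.
elim: m => // [[|m] IH] _.
  rewrite /SU /SV /SW /= !big_cons !big_nil /=.
  by rewrite expr0 !mulr1n !mulr0n !addr0 add0r.
rewrite stS (stepU y (ltn0Sn m)) (stepV y (ltn0Sn m)) (stepW y (ltn0Sn m)) -IH //=.
by case: (up m).
Qed.

Lemma Tot_st m : (0 < m)%N -> Tot y m = let: (a, b, c) := st m in a + y * b + c.
Proof. by move=> m0; rewrite Tot_split // -st_ok. Qed.

Definition L (n : nat) := \sum_(0 <= j < n./2.+1) y ^+ j *+ Y (n - j) j.

Lemma Lbound n N : (2 <= n)%N -> (n./2 < N)%N -> \sum_(0 <= j < N) y ^+ j *+ Y (n - j) j = L n.
Proof.
move=> h1 h2; rewrite /L (big_cat_nat _ (n:=n./2.+1)) //= [X in _ + X]big1_seq ?addr0 // => j.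
by rewrite mem_index_iota => /andP[_ /andP[hj _]]; rewrite Y0 // mulr0n.
Qed.

Lemma Lrec m : L m.+4 = L m.+3 + y * L m.+2.
Proof.
have h1 : (half m.+4 < m.+4.+1)%N by lia.
have h2 : (half m.+3 < m.+4.+1)%N by lia.
have h3 : (half m.+2 < m.+4)%N by lia.
rewrite -(@Lbound m.+4 m.+4.+1 isT h1) -(@Lbound m.+3 m.+4.+1 isT h2) -(@Lbound m.+2 m.+4 isT h3).
rewrite (@big_nat_recl _ _ _ m.+4) // (@big_nat_recl _ _ _ m.+4) // -addrA; congr (_ + _).
rewrite mulr_sumr -big_split; apply: eq_bigr => j _.
by rewrite Yrec mulrnDr exprS mulrnAr.
Qed.
End Alg2.

Section Alg3.
Import GRing.Theory.
Local Open Scope ring_scope.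
Variable R : comNzRingType.
Variable y : R.

Lemma L2 : L y 2 = 1 + y *+ 2.
Proof. rewrite /L unlock /= (_ : Y (2 - 0) 0 = 1%N) // (_ : Y (2 - 1) 1 = 2%N) //; ring. Qed.

Lemma L3 : L y 3 = 1 + y *+ 3.
Proof. rewrite /L unlock /= (_ : Y (3 - 0) 0 = 1%N) // (_ : Y (3 - 1) 1 = 3%N) //; ring. Qed.

Lemma st_even t : st y (t.*2.+4) = (L y t.*2.+3, L y t.*2.+2, 0).
Proof.
elim: t => [|t IH].
  rewrite /= L2 L3 /stepf /up /=; congr (_, _, _); ring.
have u1 : up t.*2.+3 = false by apply/negbTE; rewrite /up; lia.
have u2 : up t.*2.+4 = true by rewrite /up; apply/andP; split; lia.
rewrite doubleS (stS y t.*2.+4) (stS y t.*2.+3) IH u1 u2 /stepf.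
rewrite (Lrec y t.*2.+1) (Lrec y t.*2); congr (_, _, _); ring.
Qed.

Lemma Tot_L n : (2 <= n)%N -> Tot y n = L y n.
Proof.
move=> hn; rewrite Tot_st; last lia.
case: (boolP (odd n)) => on.
  have [t ->] : exists t, n = t.*2.+3 by exists (half (n - 3)); lia.
  case: t => [|t].
    rewrite L3 /= /stepf /=; ring.
  rewrite doubleS (stS y t.*2.+3) st_even.
  have u1 : up t.*2.+3 = false by apply/negbTE; rewrite /up; lia.
  rewrite u1 /= (Lrec y t.*2.+1) (Lrec y t.*2); ring.
have [t ->] : exists t, n = t.*2.+2 by exists (half (n - 2)); lia.
case: t => [|t].
  rewrite L2 /= /stepf /=; ring.
rewrite doubleS st_even (Lrec y t.*2); ring.
Qed.
End Alg3.

Unset Implicit Arguments.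
Import GRing.Theory.
Local Open Scope ring_scope.

Lemma coef1X (a k : nat) : ((1 + 'X : {poly int}) ^+ a)`_k = ('C(a, k))%:R.
Proof.
rewrite exprDn coef_sum.
under eq_bigr => i _ do rewrite expr1n mul1r coefMn coefXn.
case: (ltnP k a.+1) => ka.
  rewrite (bigD1 (Ordinal ka)) //= eqxx big1 ?addr0 // => i ni.
  rewrite (_ : (k == i) = false) ?mul0rn //; apply/negbTE; apply: contra ni => /eqP ki.
  by apply/eqP/val_inj => /=; rewrite ki.
rewrite bin_small // big1 // => i _; rewrite (_ : (k == i) = false) ?mul0rn //.
by apply/negbTE; have := ltn_ord i; lia.
Qed.

Theorem mainTheorem11 (n : nat) (hn : (2 <= n)%N) :
  forall k : nat,
    (\sum_(j < (n./2).+1) (Y (n - j) j)%:R *: (1 + 'X) ^+ j : {poly int})`_k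
    = (q n k)%:R.
Proof.
move=> k.
have n0 : (0 < n)%N by lia.
rewrite (q_count k (Ordinal n0)) natr_sum.
set y : {poly int} := 1 + 'X.
have E1 : \sum_(j < n./2.+1) (Y (n - j) j)%:R *: y ^+ j = L y n.
  rewrite /L big_mkord; apply: eq_bigr => j _; by rewrite scaler_nat.
rewrite E1 -Tot_L // /Tot -(@sum_bits n _ (fun s => y ^+ countL s *+ validL s)) coef_sum.
apply: eq_bigr => F _; rewrite -filter_valid.
case: (boolP (is_filter F)) => fF; last by rewrite coefMn mulr0n mul0n.
by rewrite -card_add // coefMn mulr1n mul1n coef1X.
Qed.
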